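(* Let $(M,g)$ be an oriented Riemannian $8$-manifold with Hodge star $*$ and let $v,w$ be vector fields. The linear operator $B$ on $4$-forms given by $B\alpha = w\lrcorner *(v\lrcorner\alpha) - v\lrcorner *(w\lrcorner\alpha)$ is skew-symmetric with respect to the inner product induced by $g$, and its eigenvalues are $0$ and $\pm i|v\wedge w|$.
   Context: In the paper $g$ is the metric of a $\mathrm{Spin}(7)$-structure. $|v\wedge w|$ denotes the norm of the bivector $v\wedge w$, i.e. $|v\wedge w|^2 = |v|^2|w|^2 - g(v,w)^2$. *)

(* Defs.v *)
(* Pointwise linear algebra on an oriented 8-dim Euclidean
   space, realised as R^8 with the standard (oriented, orthonormal) basis. *)
From HB Require Import structures.
From mathcomp Require Import all_boot all_order all_algebra.
From mathcomp Require Import complex.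
Set Implicit Arguments. Unset Strict Implicit. Unset Printing Implicit Defensive.
Import Order.TTheory GRing.Theory Num.Theory.
Local Open Scope ring_scope.

Section Forms.
Variable R : rcfType.

Definition vec8 := 'I_8 -> R.

(* differential forms at a point: an element of the exterior algebra
   Lambda(R^8), given by its coefficients on the orthonormal basis
   e_I = e_{i_1} /\ ... /\ e_{i_k}, I = {i_1 < ... < i_k}. *)
Definition extform := {set 'I_8} -> R.

Definition is_kform (k : nat) (a : extform) : Prop :=
  forall I : {set 'I_8}, #|I| != k -> a I = 0.

Definition pos (i : 'I_8) (I : {set 'I_8}) : nat := #|[set j in I | (j < i)%N]|.

(* interior product v _| a (vectors identified with 1-forms via g):
   v _| e_I = sum_{i in I} (-1)^(pos i I) v_i e_{I \ i} *)
Definition interior (v : vec8) (a : extform) : extform :=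
  fun J => \sum_(i : 'I_8 | i \notin J) (-1) ^+ pos i (i |: J) * v i * a (i |: J).

(* sign of the permutation (I sorted, complement of I sorted) *)
Definition hsign (I : {set 'I_8}) : R :=
  (-1) ^+ #|[set p : 'I_8 * 'I_8 | (p.1 \in I) && (p.2 \notin I) && (p.2 < p.1)%N]|.

(* Hodge star for the standard metric and orientation e_0 /\ ... /\ e_7:
   * e_I = hsign I e_{I^c}, so that e_I /\ * e_I = vol. *)
Definition hodge (a : extform) : extform := fun J => hsign (~: J) * a (~: J).

(* inner product induced by g on forms (e_I orthonormal) *)
Definition form_dot (a b : extform) : R := \sum_(I : {set 'I_8}) a I * b I.

Definition Bop (v w : vec8) (a : extform) : extform :=
  fun J => interior w (hodge (interior v a)) J - interior v (hodge (interior w a)) J.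

Definition vdot (v w : vec8) : R := \sum_i v i * w i.

Definition wedge_norm (v w : vec8) : R :=
  Num.sqrt (vdot v v * vdot w w - vdot v w ^+ 2).

Definition quad : {set {set 'I_8}} := [set I : {set 'I_8} | #|I| == 4%N].

Definition basis4 (I : {set 'I_8}) : extform := fun J => (J == I)%:R.

Definition Bmatrix (v w : vec8) : 'M[complex R]_#|quad| :=
  \matrix_(i, j) Complex (Bop v w (basis4 (enum_val j)) (enum_val i)) 0.

End Forms.

(* Main.v *)
Require Import Defs.
From HB Require Import structures.
From mathcomp Require Import all_boot all_order all_algebra.
From mathcomp Require Import complex ring lra zify.
From Stdlib Require Import FunctionalExtensionality.
Set Implicit Arguments. Unset Strict Implicit. Unset Printing Implicit Defensive.
Import Order.TTheory GRing.Theory Num.Theory.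
Local Open Scope ring_scope.

Lemma posU (i k : 'I_8) (J : {set 'I_8}) : i \notin J -> pos k (i |: J) = (pos k J + (i < k))%N.
Proof.
move=> iJ; rewrite /pos; case: ltnP => h.
  have -> : [set j in i |: J | (j < k)%N] = i |: [set j in J | (j < k)%N].
    by apply/setP => j; rewrite !inE; case: eqP => [->|]; rewrite ?h.
  by rewrite cardsU1 inE (negPf iJ) addnC.
have -> : [set j in i |: J | (j < k)%N] = [set j in J | (j < k)%N].
  apply/setP => j; rewrite !inE; case: eqP => [->|] //=.
  by rewrite ltnNge h andbF.
by rewrite addn0.
Qed.

Lemma posD (i k : 'I_8) (J : {set 'I_8}) : i \in J -> pos k J = (pos k (J :\ i) + (i < k))%N.
Proof. by move=> iJ; rewrite -posU ?setD11 // setD1K. Qed.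

Lemma posUii (i : 'I_8) (J : {set 'I_8}) : i \notin J -> pos i (i |: J) = pos i J.
Proof. by move=> iJ; rewrite posU // ltnn addn0. Qed.

Definition hcnt (K : {set 'I_8}) :=
  #|[set p : 'I_8 * 'I_8 | (p.1 \in K) && (p.2 \notin K) && (p.2 < p.1)%N]|.
Definition fcnt (K : {set 'I_8}) (p : 'I_8) := #|[set q : 'I_8 | (q \notin K) && (q < p)%N]|.

Lemma hcntE (K : {set 'I_8}) : hcnt K = (\sum_(p in K) fcnt K p)%N.
Proof.
rewrite /hcnt -sum1dep_card.
rewrite (eq_bigl (fun x : 'I_8 * 'I_8 => (x.1 \in K) && ((x.2 \notin K) && (x.2 < x.1)%N))); last first.
  by move=> x; rewrite andbA.
rewrite -(pair_big_dep (fun p => p \in K) (fun p q => (q \notin K) && (q < p)%N) (fun _ _ => 1%N)) /=.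
by apply: eq_bigr => p _; rewrite sum1dep_card.
Qed.

Lemma lt_card (i : 'I_8) : #|[set q : 'I_8 | (q < i)%N]| = i.
Proof.
rewrite -sum1dep_card (big_ord_narrow (F := fun _ => 1%N) (ltnW (ltn_ord i))).
by rewrite sum1_card card_ord.
Qed.

Lemma fU (K : {set 'I_8}) (i p : 'I_8) : i \notin K -> fcnt K p = (fcnt (i |: K) p + (i < p))%N.
Proof.
move=> iK; rewrite /fcnt; case: ltnP => h.
  have -> : [set q | (q \notin K) && (q < p)%N] = i |: [set q | (q \notin i |: K) && (q < p)%N].
    apply/setP => j; rewrite !inE; case: (eqVneq j i) => [->|] //=; by rewrite h iK.
  by rewrite cardsU1 !inE eqxx /= addnC.
have -> : [set q | (q \notin K) && (q < p)%N] = [set q | (q \notin i |: K) && (q < p)%N].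
  apply/setP => j; rewrite !inE; case: (eqVneq j i) => [->|] //=.
  by rewrite ltnNge h andbF.
by rewrite addn0.
Qed.

Lemma cntA (K : {set 'I_8}) (i : 'I_8) : i \notin K -> (fcnt (i |: K) i + pos i K)%N = i.
Proof.
move=> iK; rewrite -[X in _ = X]lt_card -(cardsID K) addnC /fcnt /pos; congr (_ + _)%N.
  by apply: eq_card => q; rewrite !inE andbC.
apply: eq_card => q; rewrite !inE; case: (eqVneq q i) => [->|] /=; last by [].
by rewrite ltnn !andbF.
Qed.

Lemma cntB (K : {set 'I_8}) (i : 'I_8) : i \notin K -> (#|[set p in K | (i < p)%N]| + pos i K)%N = #|K|.
Proof.
move=> iK; rewrite -(cardsID [set p : 'I_8 | (i < p)%N] K) /pos; congr (_ + _)%N.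
  by apply: eq_card => q; rewrite !inE andbC.
apply: eq_card => q; rewrite !inE; case: (eqVneq q i) => [->|qi] /=.
  by rewrite ltnn andbF /=; apply/esym/negbTE.
have -> : (~~ (i < q))%N = (q < i)%N.
  by rewrite -leqNgt leq_eqVlt (_ : (q == i :> nat) = false) //; apply/negbTE.
by rewrite andbC.
Qed.

Lemma hcntU (K : {set 'I_8}) (i : 'I_8) : i \notin K ->
  (hcnt (i |: K) + #|[set p in K | (i < p)%N]|)%N = (hcnt K + fcnt (i |: K) i)%N.
Proof.
move=> iK; rewrite !hcntE (bigD1 i) ?setU11 //=.
have -> : (\sum_(p | (p \in i |: K) && (p != i)) fcnt (i |: K) p)%N = (\sum_(p in K) fcnt (i |: K) p)%N.
  apply: eq_bigl => p; rewrite in_setU1; case: (eqVneq p i) => [->|] //=.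
  by apply/esym/negbTE.
  by rewrite andbT.
have -> : (\sum_(p in K) fcnt K p)%N = (\sum_(p in K) fcnt (i |: K) p + \sum_(p in K) (i < p))%N.
  by rewrite -big_split /=; apply: eq_bigr => p _; rewrite (fU p iK).
rewrite -sum1dep_card.
have -> : (\sum_(p in K) (i < p))%N = (\sum_(x | (x \in K) && (i < x)%N) 1)%N.
  by rewrite big_mkcondr /=; apply: eq_bigr => p _; case: (i < p)%N.
rewrite /=; ring.
Qed.

Lemma sgn2' (R : rcfType) (n : nat) : (-1) ^+ n * (-1) ^+ n = 1 :> R.
Proof. by rewrite -exprMn mulrNN mulr1 expr1n. Qed.

Lemma hsignU (R : rcfType) (K : {set 'I_8}) (i : 'I_8) : i \notin K ->
  hsign R (i |: K) = (-1) ^+ (i + #|K|) * hsign R K.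
Proof.
move=> iK; rewrite /hsign -/(hcnt (i |: K)) -/(hcnt K).
have e := congr1 (fun n => (-1) ^+ n : R) (hcntU iK); move: e => /=.
have ei : (-1) ^+ (i : nat) = (-1) ^+ fcnt (i |: K) i * (-1) ^+ pos i K :> R.
  by rewrite -exprD cntA.
have eK : (-1) ^+ #|K| = (-1) ^+ #|[set p in K | (i < p)%N]| * (-1) ^+ pos i K :> R.
  by rewrite -exprD cntB.
rewrite !exprD ei eK.
have hP := sgn2' R (pos i K); have hB := sgn2' R #|[set p in K | (i < p)%N]|.
move: hP hB.
set sP := (-1) ^+ pos i K; set sB := (-1) ^+ #|_|; set sA := (-1) ^+ fcnt _ _.
set s' := (-1) ^+ hcnt (i |: K); set s := (-1) ^+ hcnt K => hP hB e.
transitivity (s' * (sB * sB)); first by rewrite hB mulr1.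
rewrite mulrA e.
transitivity ((sP * sP) * (sA * sB * s)); last by ring.
by rewrite hP mul1r; ring.
Qed.

Section Forms.
Variable R : rcfType.
Local Notation vec := (vec8 R).
Local Notation form := (extform R).

Definition ext (u : vec) (a : form) : form :=
  fun J => \sum_(i in J) (-1) ^+ pos i J * u i * a (J :\ i).

Lemma sgn2 (n : nat) : (-1) ^+ n * (-1) ^+ n = 1 :> R.
Proof. by rewrite -exprMn mulrNN mulr1 expr1n. Qed.

Lemma sgnC (n : nat) (x y z : R) : (-1) ^+ n * x * ((-1) ^+ n * y * z) = x * y * z.
Proof. have := sgn2 n; set s := (-1) ^+ n => h; rewrite -[RHS]mul1r -h; ring. Qed.

Lemma setU1D1 (i k : 'I_8) (J : {set 'I_8}) : i != k -> (i |: J) :\ k = i |: (J :\ k).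
Proof.
move=> ik; apply/setP => x; rewrite !inE.
case: (eqVneq x i) => [xi|xi] /= //.
by subst x; rewrite ik.
Qed.

Lemma int_ext (u u' : vec) (a : form) J :
  interior u (ext u' a) J = vdot u u' * a J - ext u' (interior u a) J.
Proof.
rewrite /interior /ext /vdot.
rewrite [\sum_(i < 8) u i * u' i](bigID (fun i => i \in J)) /= addrC.
have E1 : \sum_(i | i \notin J) (-1) ^+ pos i (i |: J) * u i *
     (\sum_(k in i |: J) (-1) ^+ pos k (i |: J) * u' k * a ((i |: J) :\ k)) =
  \sum_(i | i \notin J) u i * u' i * a J +
  \sum_(i | i \notin J) \sum_(k in J) (-1) ^+ pos i J * u i *
      ((-1) ^+ (pos k J + (i < k)) * u' k * a (i |: (J :\ k))).
  rewrite -big_split /=; apply: eq_bigr => i iJ.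
  rewrite (bigD1 i) ?setU11 //= setU1K // mulrDr posUii //; congr (_ + _).
    by rewrite sgnC.
  rewrite mulr_sumr; apply: eq_big => k.
    rewrite in_setU1; case: (eqVneq k i) => [->|] //=; [by apply/esym/negbTE | by rewrite andbT].
  move=> /andP[]; rewrite !inE => /orP[/eqP -> | kJ]; first by rewrite eqxx.
  move=> ki; rewrite posU // setU1D1 // eq_sym //.
have E2 : \sum_(k in J) (-1) ^+ pos k J * u' k *
     (\sum_(i | i \notin J :\ k) (-1) ^+ pos i (i |: J :\ k) * u i * a (i |: J :\ k)) =
  \sum_(k in J) u k * u' k * a J +
  \sum_(k in J) \sum_(i | i \notin J) (-1) ^+ pos k J * u' k *
      ((-1) ^+ pos i (J :\ k) * u i * a (i |: (J :\ k))).
  rewrite -big_split /=; apply: eq_bigr => k kJ.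
  rewrite (bigD1 k) ?setD11 //= setD1K // mulrDr; congr (_ + _).
    by rewrite sgnC (mulrC (u' k)).
  rewrite mulr_sumr; apply: eq_big => i.
    rewrite in_setD1 negb_and negbK; case: (eqVneq i k) => [->|] //=; [by apply/esym/negbTE; rewrite negbK | by rewrite andbT].
  by move=> /andP[iJk ik]; rewrite posUii.
rewrite E1 E2.
have key : \sum_(i | i \notin J) \sum_(k in J) (-1) ^+ pos i J * u i *
      ((-1) ^+ (pos k J + (i < k)) * u' k * a (i |: (J :\ k))) =
  - \sum_(k in J) \sum_(i | i \notin J) (-1) ^+ pos k J * u' k *
      ((-1) ^+ pos i (J :\ k) * u i * a (i |: (J :\ k))).
  rewrite exchange_big -sumrN; apply: eq_bigr => k kJ.
  rewrite -sumrN; apply: eq_bigr => i iJ.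
  rewrite (posD i kJ).
  case: (ltngtP i k) => h /=.
  - by rewrite addn0 exprD expr1; ring.
  - by rewrite addn0 exprD expr1; ring.
  - by move/val_inj: h => h; subst i; rewrite kJ in iJ.
rewrite key mulrDl !big_distrl /=; ring.
Qed.

Lemma signD (p q : nat) (i k : 'I_8) : i != k ->
  (-1) ^+ (p + (i < k)) * (-1) ^+ q = - ((-1) ^+ (q + (k < i)) * (-1) ^+ p) :> R.
Proof.
move=> ik; case: (ltngtP i k) => h /=.
- by rewrite addn0 exprD expr1; ring.
- by rewrite addn0 exprD expr1; ring.
- by move/val_inj: h ik => ->; rewrite eqxx.
Qed.

Lemma ext_ext (u u' : vec) (a : form) J :
  ext u (ext u' a) J = - ext u' (ext u a) J.
Proof.
rewrite /ext.
under eq_bigr do rewrite mulr_sumr.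
rewrite (exchange_big_dep (fun k => k \in J)) /=; last by move=> i k _; rewrite in_setD1 => /andP[].
rewrite -sumrN; apply: eq_bigr => k kJ.
rewrite mulr_sumr -sumrN; apply: eq_big => i.
  rewrite !in_setD1; case: (eqVneq i k) => [->|ik] /=; first by rewrite andbF.
  by rewrite kJ andbT.
move=> /andP[iJ]; rewrite in_setD1 => /andP[ki _].
have -> : J :\ i :\ k = J :\ k :\ i by rewrite !setDDl setUC.
rewrite (posD i kJ) (posD k iJ).
have := signD (pos i (J :\ k)) (pos k (J :\ i)) ki.
set s1 := (-1) ^+ _; set s2 := (-1) ^+ _; set s3 := (-1) ^+ _; set s4 := (-1) ^+ _.
move=> h.
transitivity ((s1 * s2) * (u i * u' k * a (J :\ k :\ i))); first by ring.
by rewrite h; ring.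
Qed.

Lemma ext_ext0 (u : vec) (a : form) J : ext u (ext u a) J = 0.
Proof. have := ext_ext u u a J; lra. Qed.

Lemma int_int (u u' : vec) (a : form) J :
  interior u (interior u' a) J = - interior u' (interior u a) J.
Proof.
rewrite /interior.
under eq_bigr do rewrite mulr_sumr.
rewrite (exchange_big_dep (fun k => k \notin J)) /=; last first.
  by move=> i k _; rewrite in_setU1 negb_or => /andP[].
rewrite -sumrN; apply: eq_bigr => k kJ.
rewrite mulr_sumr -sumrN; apply: eq_big => i.
  rewrite !in_setU1 !negb_or; case: (eqVneq i k) => [->|ik] /=; first by rewrite andbF.
  by rewrite kJ andbT.
move=> /andP[iJ kiJ]; move: (kiJ); rewrite in_setU1 negb_or => /andP[ki _].
have ikJ : i \notin k |: J by rewrite in_setU1 negb_or eq_sym ki.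
rewrite (posUii iJ) (posUii kiJ) (posUii kJ) (posUii ikJ) (posU _ iJ) (posU _ kJ).
have -> : k |: (i |: J) = i |: (k |: J) by rewrite !setUA (setUC [set k]).
have ik : i != k by rewrite eq_sym.
have := signD (pos k J) (pos i J) ik.
set s1 := (-1) ^+ _; set s2 := (-1) ^+ _; set s3 := (-1) ^+ _; set s4 := (-1) ^+ _.
move=> h.
transitivity ((s1 * s2) * (u i * u' k * a (i |: (k |: J)))); first by ring.
by rewrite h; ring.
Qed.

Lemma int_int0 (u : vec) (a : form) J : interior u (interior u a) J = 0.
Proof. have := int_int u u a J; lra. Qed.

Lemma sgnE (n m c : nat) : (n + m)%N = c -> (-1) ^+ n = (-1) ^+ c * (-1) ^+ m :> R.
Proof.
move=> <-; rewrite exprD -mulrA sgn2 mulr1 //.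
Qed.

Lemma posC (i : 'I_8) (J : {set 'I_8}) : (pos i J + pos i (~: J))%N = i.
Proof.
rewrite -[X in _ = X]lt_card -(cardsID J [set q : 'I_8 | (q < i)%N]) /pos.
by congr (_ + _)%N; apply: eq_card => q; rewrite !inE andbC.
Qed.

Lemma cardC8 (J : {set 'I_8}) : (#|J| + #|~: J|)%N = 8%N.
Proof. by rewrite cardsC card_ord. Qed.

Lemma hsign_sq K : hsign R K * hsign R K = 1.
Proof. exact: sgn2. Qed.

Lemma hsignC (K : {set 'I_8}) : hsign R K * hsign R (~: K) = (-1) ^+ #|K|.
Proof.
have [n cK] : exists n, #|K| = n by eexists.
elim: n K cK => [|n IH] K.
  move/eqP; rewrite cards_eq0 => /eqP ->; rewrite setC0 /hsign cards0 expr0.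
  have -> : [set p : 'I_8 * 'I_8 | (p.1 \in set0) && (p.2 \notin set0) && (p.2 < p.1)%N] = set0.
    by apply/setP => p; rewrite !inE.
  have -> : [set p : 'I_8 * 'I_8 | (p.1 \in setT) && (p.2 \notin setT) && (p.2 < p.1)%N] = set0.
    by apply/setP => p; rewrite !inE andbF.
  by rewrite cards0 mulr1.
move=> cK; have : (0 < #|K|)%N by rewrite cK.
case/card_gt0P => i iK.
rewrite cK.
have iK0 : i \notin K :\ i by rewrite setD11.
have cK0 : #|K :\ i| = n by move: cK; rewrite (cardsD1 i K) iK add1n => -[].
have iC : i \notin ~: K by rewrite in_setC iK.
have eC : ~: (K :\ i) = i |: ~: K.
  by apply/setP => x; rewrite !inE negb_and negbK orbC.
have := IH _ cK0; rewrite eC (hsignU _ iC) -(setD1K iK) (hsignU _ iK0) setD1K //.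
have cs := cardC8 K.
have ed : (-1) ^+ #|~: K| = (-1) ^+ n.+1 :> R.
  rewrite (sgnE (m := n.+1) (c := 8%N)); last by rewrite addnC -cK.
  by rewrite !exprS expr0 !mulN1r !opprK mul1r.
rewrite cK0 !exprD ed exprS => h.
transitivity (- (hsign R (K :\ i) * ((-1) ^+ i * (-1 * (-1) ^+ n) * hsign R (~: K)))); first by ring.
by rewrite h; ring.
Qed.

Lemma hsign4 (K : {set 'I_8}) : #|K| = 4%N -> hsign R (~: K) = hsign R K.
Proof.
move=> cK; have := hsignC K; rewrite cK => h.
rewrite -[LHS]mul1r -(hsign_sq K) -mulrA h.
by rewrite !exprS expr0 !mulN1r !opprK mulr1.
Qed.

Lemma setCU1 (i : 'I_8) (J : {set 'I_8}) : ~: (i |: J) = ~: J :\ i.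
Proof. by apply/setP => x; rewrite !inE negb_or. Qed.

Lemma setCD1 (i : 'I_8) (J : {set 'I_8}) : ~: (J :\ i) = i |: ~: J.
Proof. by apply/setP => x; rewrite !inE negb_and negbK. Qed.

Lemma e8 : (-1) ^+ 8 = 1 :> R.
Proof. by rewrite !exprS expr0 !mulN1r !opprK. Qed.

Lemma int_hodge (u : vec) (a : form) J :
  interior u (hodge a) J = (-1) ^+ (#|J| + 1) * hodge (ext u a) J.
Proof.
rewrite /interior /hodge /ext mulr_sumr mulr_sumr.
apply: eq_big => i; first by rewrite in_setC.
move=> iJ; have iK : i \in ~: J by rewrite in_setC.
rewrite setCU1 (posUii iJ).
have iK' : i \notin ~: J :\ i by rewrite setD11.
have eh : hsign R (~: J) = (-1) ^+ (i + #|~: J :\ i|) * hsign R (~: J :\ i).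
  by rewrite -(hsignU _ iK') setD1K.
rewrite eh.
rewrite (sgnE (m := pos i (~: J)) (c := i)) ?posC //.
rewrite (sgnE (n := (#|J| + 1)%N) (m := #|~: J :\ i|) (c := 8%N)); last first.
  have c1 := cardC8 J; have c2 := cardsD1 i (~: J); rewrite iK /= in c2.
  by apply: etrans _ (cardC8 J); rewrite c2 addnA.
rewrite e8 mul1r exprD.
have h := sgn2 #|~: J :\ i|; move: h.
set s1 := (-1) ^+ #|_|; set s2 := (-1) ^+ (i : nat); set s3 := (-1) ^+ pos i _ => h.
transitivity ((s1 * s1) * (s2 * s3 * u i * (hsign R (~: J :\ i) * a (~: J :\ i)))); last by ring.
by rewrite h mul1r.
Qed.

Lemma ext_hodge (u : vec) (a : form) J :
  ext u (hodge a) J = (-1) ^+ #|J| * hodge (interior u a) J.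
Proof.
rewrite /interior /hodge /ext mulr_sumr mulr_sumr.
apply: eq_big => i; first by rewrite in_setC negbK.
move=> iJ; have iK : i \notin ~: J by rewrite in_setC negbK.
rewrite setCD1 (posUii iK) (hsignU _ iK).
rewrite (sgnE (m := pos i (~: J)) (c := i)) ?posC //.
rewrite (sgnE (n := #|J|) (m := #|~: J|) (c := 8%N)) ?cardC8 //.
rewrite e8 mul1r exprD.
have h := sgn2 i; move: h.
set s1 := (-1) ^+ #|_|; set s2 := (-1) ^+ (i : nat); set s3 := (-1) ^+ pos i _ => h.
transitivity ((s2 * s2) * (s1 * s3 * u i * (hsign R (~: J) * a (i |: ~: J)))); first by ring.
by rewrite h mul1r; ring.
Qed.

Definition addF (x y : form) : form := fun J => x J + y J.
Definition scaleF (k : R) (x : form) : form := fun J => k * x J.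
Definition zeroF : form := fun _ => 0.

Lemma ext_add u x y : ext u (addF x y) = addF (ext u x) (ext u y).
Proof. by apply: functional_extensionality => J; rewrite /ext /addF -big_split; apply: eq_bigr => i _; rewrite mulrDr. Qed.
Lemma ext_scale u k x : ext u (scaleF k x) = scaleF k (ext u x).
Proof. by apply: functional_extensionality => J; rewrite /ext /scaleF mulr_sumr; apply: eq_bigr => i _; ring. Qed.
Lemma ext_zero u : ext u zeroF = zeroF.
Proof. by apply: functional_extensionality => J; rewrite /ext /zeroF big1 // => i _; rewrite mulr0. Qed.
Lemma int_add u x y : interior u (addF x y) = addF (interior u x) (interior u y).
Proof. by apply: functional_extensionality => J; rewrite /interior /addF -big_split; apply: eq_bigr => i _; rewrite mulrDr. Qed.
Lemma int_scale u k x : interior u (scaleF k x) = scaleF k (interior u x).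
Proof. by apply: functional_extensionality => J; rewrite /interior /scaleF mulr_sumr; apply: eq_bigr => i _; ring. Qed.
Lemma int_zero u : interior u zeroF = zeroF.
Proof. by apply: functional_extensionality => J; rewrite /interior /zeroF big1 // => i _; rewrite mulr0. Qed.

Lemma R1 u u' x : interior u (ext u' x) =
  addF (scaleF (vdot u u') x) (scaleF (-1) (ext u' (interior u x))).
Proof. by apply: functional_extensionality => J; rewrite int_ext /addF /scaleF; ring. Qed.
Lemma R2 u u' x : ext u (ext u' x) = scaleF (-1) (ext u' (ext u x)).
Proof. by apply: functional_extensionality => J; rewrite ext_ext /scaleF; ring. Qed.
Lemma R3 u u' x : interior u (interior u' x) = scaleF (-1) (interior u' (interior u x)).
Proof. by apply: functional_extensionality => J; rewrite int_int /scaleF; ring. Qed.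
Lemma R4 u x : ext u (ext u x) = zeroF.
Proof. by apply: functional_extensionality => J; rewrite ext_ext0. Qed.
Lemma R5 u x : interior u (interior u x) = zeroF.
Proof. by apply: functional_extensionality => J; rewrite int_int0. Qed.

Lemma vdotC (u u' : vec) : vdot u u' = vdot u' u.
Proof. by rewrite /vdot; apply: eq_bigr => i _; rewrite mulrC. Qed.

Definition Dop (v w : vec) (a : form) : form :=
  addF (ext w (interior v a)) (scaleF (-1) (ext v (interior w a))).

Definition N2 (v w : vec) : R := vdot v v * vdot w w - vdot v w ^+ 2.

Lemma D3 (v w : vec) (x : form) :
  Dop v w (Dop v w (Dop v w x)) = scaleF (- N2 v w) (Dop v w x).
Proof.
rewrite /Dop.
do 20! rewrite ?ext_add ?ext_scale ?ext_zero ?int_add ?int_scale ?int_zero ?R1 ?R4 ?R5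
   ?(R2 v w) ?(R3 w v).
apply: functional_extensionality => J.
rewrite /addF /scaleF /zeroF /N2 (vdotC w v).
ring.
Qed.

Lemma hodge_add x y : hodge (addF x y) = addF (hodge x) (hodge y).
Proof. by apply: functional_extensionality => J; rewrite /hodge /addF mulrDr. Qed.
Lemma hodge_scale k x : hodge (scaleF k x) = scaleF k (hodge x).
Proof. by apply: functional_extensionality => J; rewrite /hodge /scaleF; ring. Qed.

Lemma Bop_D (v w : vec) (a : form) J :
  Bop v w a J = (-1) ^+ (#|J| + 1) * hodge (Dop v w a) J.
Proof.
rewrite /Bop !int_hodge /Dop hodge_add hodge_scale /addF /scaleF.
ring.
Qed.

Lemma ext_sgn u (f : form) J :
  ext u (fun K => (-1) ^+ (#|K| + 1) * f K) J = (-1) ^+ #|J| * ext u f J.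
Proof.
rewrite /ext mulr_sumr; apply: eq_bigr => i iJ.
have -> : (#|J :\ i| + 1)%N = #|J| by rewrite (cardsD1 i J) iJ addnC.
ring.
Qed.

Lemma D_hodge (v w : vec) (b : form) : Dop v w (hodge b) = hodge (Dop v w b).
Proof.
apply: functional_extensionality => J.
have E : forall u, interior u (hodge b) = fun K => (-1) ^+ (#|K| + 1) * hodge (ext u b) K.
  by move=> u; apply: functional_extensionality => K; rewrite int_hodge.
rewrite /Dop /addF /scaleF !E !ext_sgn !ext_hodge.
rewrite /hodge !int_ext (vdotC w v).
have h := sgn2 #|J|; move: h; set s := (-1) ^+ #|J| => h.
transitivity ((s * s) * (hsign R (~: J) * (ext w (interior v b) (~: J) + -1 * ext v (interior w b) (~: J)))); first by ring.
by rewrite h mul1r.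
Qed.

Lemma int_deg k u (a : form) : is_kform k.+1 a -> is_kform k (interior u a).
Proof.
move=> ha J hJ; rewrite /interior big1 // => i iJ; rewrite ha ?mulr0 //.
by rewrite cardsU1 iJ add1n eqSS.
Qed.

Lemma ext_deg k u (a : form) : is_kform k a -> is_kform k.+1 (ext u a).
Proof.
move=> ha J hJ; rewrite /ext big1 // => i iJ; rewrite ha ?mulr0 //.
apply: contra hJ => /eqP <-; by rewrite (cardsD1 i J) iJ add1n.
Qed.

Lemma add_deg k x y : is_kform k x -> is_kform k y -> is_kform k (addF x y).
Proof. by move=> hx hy J hJ; rewrite /addF hx ?hy ?addr0. Qed.

Lemma scale_deg k c x : is_kform k x -> is_kform k (scaleF c x).
Proof. by move=> hx J hJ; rewrite /scaleF hx ?mulr0. Qed.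

Lemma hodge_deg4 (a : form) : is_kform 4 a -> is_kform 4 (hodge a).
Proof.
move=> ha J hJ; rewrite /hodge ha ?mulr0 //.
apply: contra hJ => /eqP h; have := cardC8 J; rewrite h => e; apply/eqP.
by rewrite -(addnK 4 #|J|) e.
Qed.

Lemma D_deg4 v w (a : form) : is_kform 4 a -> is_kform 4 (Dop v w a).
Proof.
move=> ha; apply: add_deg; first by apply: ext_deg; apply: int_deg.
by apply: scale_deg; apply: ext_deg; apply: int_deg.
Qed.

Lemma B_D4 v w (a : form) : is_kform 4 a -> Bop v w a = scaleF (-1) (hodge (Dop v w a)).
Proof.
move=> ha; apply: functional_extensionality => J; rewrite Bop_D /scaleF.
case: (eqVneq #|J| 4%N) => [->|hJ]; first by rewrite !exprS expr0; ring.
by rewrite (hodge_deg4 (D_deg4 v w ha)) // !mulr0.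
Qed.

Lemma B_deg4 v w (a : form) : is_kform 4 a -> is_kform 4 (Bop v w a).
Proof.
by move=> ha; rewrite B_D4 //; apply: scale_deg; apply: hodge_deg4; apply: D_deg4.
Qed.

Lemma hodge_hodge4 (c : form) : is_kform 4 c -> hodge (hodge c) = c.
Proof.
move=> hc; apply: functional_extensionality => J; rewrite /hodge setCK.
case: (eqVneq #|J| 4%N) => [h|hJ]; last by rewrite hc ?mulr0.
by rewrite (hsign4 h) mulrA hsign_sq mul1r.
Qed.

Lemma Dop_scale v w k x : Dop v w (scaleF k x) = scaleF k (Dop v w x).
Proof.
rewrite /Dop !int_scale !ext_scale; apply: functional_extensionality => J.
rewrite /addF /scaleF; ring.
Qed.

Lemma B2 v w (a : form) : is_kform 4 a -> Bop v w (Bop v w a) = Dop v w (Dop v w a).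
Proof.
move=> ha; have hDa := D_deg4 v w ha.
have h1 : is_kform 4 (scaleF (-1) (hodge (Dop v w a))) by apply: scale_deg; apply: hodge_deg4.
rewrite (B_D4 _ _ ha) (B_D4 _ _ h1) Dop_scale hodge_scale D_hodge hodge_hodge4; last exact: D_deg4.
apply: functional_extensionality => J; rewrite /scaleF; ring.
Qed.

Lemma B3 v w (a : form) : is_kform 4 a ->
  Bop v w (Bop v w (Bop v w a)) = scaleF (- N2 v w) (Bop v w a).
Proof.
move=> ha; have hDa := D_deg4 v w ha; have hDDa := D_deg4 v w hDa.
rewrite (B2 _ _ ha) (B_D4 _ _ hDDa) D3 (B_D4 _ _ ha) !hodge_scale.
apply: functional_extensionality => J; rewrite /scaleF; ring.
Qed.

Lemma dot_add (x y z : form) : form_dot (addF x y) z = form_dot x z + form_dot y z.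
Proof. by rewrite /form_dot /addF -big_split; apply: eq_bigr => I _; rewrite mulrDl. Qed.
Lemma dot_scale k (x z : form) : form_dot (scaleF k x) z = k * form_dot x z.
Proof. by rewrite /form_dot /scaleF mulr_sumr; apply: eq_bigr => I _; rewrite mulrA. Qed.
Lemma dotC (x y : form) : form_dot x y = form_dot y x.
Proof. by rewrite /form_dot; apply: eq_bigr => I _; rewrite mulrC. Qed.

Lemma dot_addr (x y z : form) : form_dot z (addF x y) = form_dot z x + form_dot z y.
Proof. by rewrite dotC dot_add !(dotC z). Qed.
Lemma dot_scaler k (x z : form) : form_dot z (scaleF k x) = k * form_dot z x.
Proof. by rewrite dotC dot_scale dotC. Qed.

Lemma dot_int_ext u (x y : form) : form_dot (interior u x) y = form_dot x (ext u y).
Proof.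
rewrite /form_dot /interior /ext.
under eq_bigr do rewrite mulr_suml.
rewrite (exchange_big_dep predT) //=.
under [RHS]eq_bigr do rewrite mulr_sumr.
rewrite [RHS](exchange_big_dep predT) //=.
apply: eq_bigr => i _.
rewrite [RHS](reindex_onto (fun J => i |: J) (fun I => I :\ i)) /=; last by move=> I iI; rewrite setD1K.
apply: eq_big => J.
  rewrite setU11 /=; case: (boolP (i \in J)) => iJ /=.
    apply/esym/negbTE; apply: contraL iJ => /eqP <-; by rewrite setD11.
  by rewrite setU1K // eqxx.
move=> iJ.
by rewrite setU1K //; ring.
Qed.

Lemma dot_ext_int u (x y : form) : form_dot (ext u x) y = form_dot x (interior u y).
Proof. by rewrite dotC -dot_int_ext dotC. Qed.

Lemma dotD v w (x y : form) : form_dot (Dop v w x) y = - form_dot x (Dop v w y).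
Proof.
rewrite /Dop !dot_add !dot_scale !dot_addr !dot_scaler.
rewrite !dot_ext_int !dot_int_ext; ring.
Qed.

Lemma hodge_sym (x y : form) : is_kform 4 x -> form_dot (hodge x) y = form_dot x (hodge y).
Proof.
move=> hx; rewrite /form_dot /hodge (reindex_inj (@setC_inj _)) /=.
apply: eq_bigr => J _; rewrite setCK.
case: (eqVneq #|J| 4%N) => [h|hJ]; last by rewrite hx ?mulr0 ?mul0r.
by rewrite (hsign4 h); ring.
Qed.

Lemma B_skew v w (a b : form) : is_kform 4 a -> is_kform 4 b ->
  form_dot (Bop v w a) b = - form_dot a (Bop v w b).
Proof.
move=> ha hb; rewrite (B_D4 _ _ ha) (B_D4 _ _ hb) dot_scale dot_scaler.
rewrite hodge_sym; last exact: D_deg4.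
by rewrite dotD D_hodge; ring.
Qed.

Lemma basis4_deg (J : {set 'I_8}) : J \in quad -> is_kform 4 (basis4 R J).
Proof.
rewrite inE => /eqP hJ I hI; rewrite /basis4; case: eqP => // e.
by move: hI; rewrite e hJ eqxx.
Qed.

Lemma dot_basis (x : form) J : form_dot x (basis4 R J) = x J.
Proof.
rewrite /form_dot (bigD1 J) //= /basis4 eqxx mulr1 big1 ?addr0 // => I /negPf ->.
by rewrite mulr0.
Qed.

Lemma dot_quad (x y : form) : is_kform 4 x ->
  form_dot x y = \sum_(I in quad) x I * y I.
Proof.
move=> hx; rewrite /form_dot (bigID (fun I => I \in quad)) /= addrC big1 ?add0r //.
by move=> I; rewrite inE => /hx ->; rewrite mul0r.
Qed.

Local Open Scope complex_scope.
Definition rv (a : form) : 'rV[R[i]]_#|quad| := \row_k (a (enum_val k))%:C.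

Lemma rvM v w (a : form) : is_kform 4 a ->
  rv a *m Bmatrix v w = rv (scaleF (-1) (Bop v w a)).
Proof.
move=> ha; apply/rowP => j; rewrite !mxE.
rewrite (eq_bigr (fun k => (a (enum_val k) * Bop v w (basis4 R (enum_val j)) (enum_val k))%:C)); last first.
  by move=> k _; rewrite !mxE complexr0 rmorphM.
rewrite -rmorph_sum; congr (_%:C).
rewrite -(big_enum_val (fun I => a I * Bop v w (basis4 R (enum_val j)) I)) -dot_quad //.
have hb := basis4_deg (enum_valP j).
by rewrite /scaleF dotC B_skew // dotC dot_basis mulN1r.
Qed.

Lemma rv_scale k (a : form) : rv (scaleF k a) = k%:C *: rv a.
Proof. by apply/rowP => j; rewrite !mxE rmorphM. Qed.

Lemma rv_delta (k : 'I_#|quad|) : delta_mx 0 k = rv (basis4 R (enum_val k)).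
Proof.
apply/rowP => j; rewrite !mxE /basis4 eqxx /= (inj_eq enum_val_inj).
by case: (j == k); rewrite ?rmorph1 ?rmorph0.
Qed.

Lemma Bop_scale v w k (a : form) : Bop v w (scaleF k a) = scaleF k (Bop v w a).
Proof.
apply: functional_extensionality => J.
by rewrite /Bop !int_scale !hodge_scale !int_scale /scaleF; ring.
Qed.

Lemma M3 v w : Bmatrix v w *m Bmatrix v w *m Bmatrix v w = (- N2 v w)%:C *: Bmatrix v w.
Proof.
apply/row_matrixP => k; rewrite !rowE rv_delta.
have he := basis4_deg (enum_valP k); set e := basis4 R (enum_val k).
have h1 := scale_deg (-1) (B_deg4 v w he).
have h2 := scale_deg (-1) (B_deg4 v w h1).
rewrite !mulmxA (rvM _ _ he) (rvM _ _ h1) (rvM _ _ h2).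
rewrite -scalemxAr (rvM _ _ he) -rv_scale; congr rv.
rewrite !Bop_scale B3 //; apply: functional_extensionality => J; rewrite /scaleF; ring.
Qed.

Lemma lagrange (v w : vec) :
  \sum_(r < 8) \sum_(s < 8) (v r * w s - v s * w r) ^+ 2 = 2 * N2 v w.
Proof.
have e : forall r s : 'I_8, (v r * w s - v s * w r) ^+ 2 =
   (v r * v r) * (w s * w s) + (v s * v s) * (w r * w r) - 2 * ((v r * w r) * (v s * w s)).
  by move=> r s; ring.
under eq_bigr do under eq_bigr do rewrite e.
under eq_bigr do rewrite big_split /= big_split /= sumrN.
rewrite big_split /= big_split /= sumrN.
rewrite -!big_distrlr /= exchange_big /= -!big_distrlr /=.
have -> : \sum_(i < 8) \sum_(j < 8) 2 * (v i * w i * (v j * w j)) =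
   2 * ((\sum_(i < 8) v i * w i) * (\sum_(j < 8) v j * w j)).
  by rewrite big_distrlr mulr_sumr; apply: eq_bigr => i _; rewrite mulr_sumr.
rewrite /N2 /vdot; ring.
Qed.

Lemma N2_ge0 (v w : vec) : 0 <= N2 v w.
Proof.
have h : 0 <= 2 * N2 v w.
  rewrite -lagrange; apply: sumr_ge0 => r _; apply: sumr_ge0 => s _; exact: sqr_ge0.
by rewrite pmulr_rge0 in h.
Qed.

Lemma N2_neq0 (v w : vec) : N2 v w != 0 -> exists r s, v r * w s - v s * w r != 0.
Proof.
move=> hN; case: (boolP [exists r : 'I_8, [exists s : 'I_8, v r * w s - v s * w r != 0]]).
  by case/existsP => r /existsP [s hs]; exists r, s.
rewrite negb_exists => /forallP H; exfalso; move: hN; apply/negP; rewrite negbK.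
have : 2 * N2 v w = 0.
  rewrite -lagrange big1 // => r _; rewrite big1 // => s _.
  have := H r; rewrite negb_exists => /forallP /(_ s); rewrite negbK => /eqP ->.
  by rewrite expr0n.
by move/eqP; rewrite mulf_eq0 pnatr_eq0.
Qed.

Lemma int_basis_zero (u : vec) (K M : {set 'I_8}) (x : 'I_8) : x \in M -> x \notin K -> interior u (basis4 R K) M = 0.
Proof.
move=> xM xK; rewrite /interior big1 // => i _; rewrite /basis4.
case: eqP => [e|]; last by rewrite mulr0.
by move: xK; rewrite -e in_setU1 xM orbT.
Qed.

Lemma ext_basis_zero (u : vec) (S M : {set 'I_8}) (x : 'I_8) : x \in S -> x \notin M -> ext u (basis4 R S) M = 0.
Proof.
move=> xS xM; rewrite /ext big1 // => i _; rewrite /basis4.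
case: eqP => [e|]; last by rewrite mulr0.
by move: xS; rewrite -e in_setD1 (negPf xM) andbF.
Qed.

Lemma int_basis (u : vec) (r : 'I_8) (T : {set 'I_8}) : r \notin T ->
  interior u (basis4 R (r |: T)) T = (-1) ^+ pos r (r |: T) * u r.
Proof.
move=> rT; rewrite /interior (bigD1 r) //= /basis4 eqxx mulr1 big1 ?addr0 // => i /andP[iT ir].
case: eqP => [e|]; last by rewrite mulr0.
have : i \in r |: T by rewrite -e setU11.
by rewrite in_setU1 (negPf ir) (negPf iT).
Qed.

Lemma ext_basis (u : vec) (S : {set 'I_8}) (x : 'I_8) : x \notin S ->
  ext u (basis4 R S) (x |: S) = (-1) ^+ pos x (x |: S) * u x.
Proof.
move=> xS; rewrite /ext (bigD1 x) ?setU11 //= setU1K // /basis4 eqxx mulr1 big1 ?addr0 //.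
move=> i /andP[iS ix]; case: eqP => [e|]; last by rewrite mulr0.
have : x \in (x |: S) :\ i by rewrite in_setD1 eq_sym ix setU11.
by rewrite e (negPf xS).
Qed.

Lemma DeK (u u' : vec) (r s : 'I_8) (T : {set 'I_8}) : r != s -> r \notin T -> s \notin T ->
  ext u (interior u' (basis4 R (r |: T))) (s |: T) =
  (-1) ^+ pos s (s |: T) * u s * ((-1) ^+ pos r (r |: T) * u' r).
Proof.
move=> rs rT sT; rewrite /ext (bigD1 s) ?setU11 //= setU1K // int_basis //.
rewrite big1 ?addr0 // => j /andP[jJ js].
rewrite (@int_basis_zero _ _ _ s) ?mulr0 //.
  by rewrite in_setD1 eq_sym js setU11.
by rewrite in_setU1 negb_or eq_sym rs.
Qed.

Lemma ker_coef (u u' : vec) (r s : 'I_8) (T : {set 'I_8}) : r != s -> r \notin T -> s \notin T ->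
  ext u (ext u' (basis4 R T)) (r |: (s |: T)) =
  (-1) ^+ pos r (r |: (s |: T)) * u r * ((-1) ^+ pos s (s |: T) * u' s) +
  (-1) ^+ pos s (r |: (s |: T)) * u s * ((-1) ^+ pos r (r |: T) * u' r).
Proof.
move=> rs rT sT.
have rsT : r \notin s |: T by rewrite in_setU1 negb_or rs.
rewrite [ext u _ _]/ext (bigD1 r) ?setU11 //= setU1K // ext_basis //; congr (_ + _).
rewrite (bigD1 s) /=; last by rewrite in_setU1 setU11 orbT eq_sym.
have -> : (r |: (s |: T)) :\ s = r |: T.
  by rewrite setU1D1 // setU1K.
rewrite ext_basis // big1 ?addr0 // => i /andP[/andP[iJ ir] i_s].
rewrite (@ext_basis_zero _ _ _ i) ?mulr0 //; last by rewrite setD11.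
by move: iJ; rewrite !in_setU1 (negPf ir) (negPf i_s).
Qed.

Lemma basis_deg k (J : {set 'I_8}) : #|J| = k -> is_kform k (basis4 R J).
Proof.
move=> hJ I hI; rewrite /basis4; case: eqP => // e.
by move: hI; rewrite e hJ eqxx.
Qed.

Lemma D_kill v w (c : form) : Dop v w (ext v (ext w c)) = zeroF.
Proof.
rewrite /Dop.
do 10! rewrite ?ext_add ?ext_scale ?ext_zero ?int_add ?int_scale ?int_zero ?R1 ?R4 ?R5
   ?(R2 v w) ?(R3 w v).
apply: functional_extensionality => J.
rewrite /addF /scaleF /zeroF (vdotC w v).
ring.
Qed.

Lemma rv0 : rv zeroF = 0.
Proof. by apply/rowP => j; rewrite !mxE rmorph0. Qed.

Lemma rv_neq0 (b : form) J : is_kform 4 b -> b J != 0 -> rv b != 0.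
Proof.
move=> hb hJ; have JQ : J \in quad.
  by rewrite inE; apply: contraR hJ => /hb ->.
apply/eqP => h; have := congr1 (fun m : 'rV[R[i]]_#|quad| => m 0 (enum_rank_in JQ J)) h.
rewrite !mxE enum_rankK_in // => /eqP; rewrite -(rmorph0 (real_complex R)).
by rewrite (inj_eq (@complexI R)) (negPf hJ).
Qed.

Lemma exists_sub (A : {set 'I_8}) k : (k <= #|A|)%N -> exists T : {set 'I_8}, T \subset A /\ #|T| = k.
Proof.
case/card_geqP => l [ul sl lA]; exists [set x in l]; split.
  by apply/subsetP => x; rewrite inE => /lA.
by rewrite cardsE (card_uniqP ul).
Qed.

Lemma sgn_neq0 n : (-1) ^+ n != 0 :> R.
Proof. by rewrite expf_eq0 oppr_eq0 oner_eq0 andbF. Qed.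

Lemma hsign_neq0 K : hsign R K != 0.
Proof. exact: sgn_neq0. Qed.

Lemma pick_rs (v w : vec) : N2 v w != 0 ->
  exists r s : 'I_8, [/\ r != s, v r * w s - v s * w r != 0 &
    forall k, (k <= 6)%N -> exists T : {set 'I_8}, [/\ r \notin T, s \notin T & #|T| = k]].
Proof.
case/N2_neq0 => r [s hm]; exists r, s; split => //.
  by apply: contraNneq hm => ->; rewrite subrr.
move=> k hk.
have rs : r != s by apply: contraNneq hm => ->; rewrite subrr.
have : (k <= #|~: [set r; s]|)%N.
  move: (cardC8 [set r; s]); rewrite cards2 rs /= => e.
  have e' : (2 + #|~: [set r; s]|)%N = 8%N := e.
  have e6 : #|~: [set r; s]| = 6%N by apply/eqP; rewrite -(eqn_add2l 2) e'.
  by rewrite e6.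
case/exists_sub => T [/subsetP TS cT]; exists T; split => //.
  by apply/negP => /TS; rewrite !inE eqxx.
by apply/negP => /TS; rewrite !inE eqxx orbT.
Qed.

Lemma B_nonzero (v w : vec) : N2 v w != 0 ->
  exists a : form, is_kform 4 a /\ exists J, Bop v w a J != 0.
Proof.
case/pick_rs => r [s [rs hm hT]].
have [T [rT sT cT]] := hT 3%N isT.
have ha : is_kform 4 (basis4 R (r |: T)) by apply: basis_deg; rewrite cardsU1 rT cT.
exists (basis4 R (r |: T)); split => //; exists (~: (s |: T)).
rewrite (B_D4 _ _ ha) /scaleF /hodge setCK.
have -> : Dop v w (basis4 R (r |: T)) (s |: T) =
    ((-1) ^+ pos s (s |: T) * (-1) ^+ pos r (r |: T)) * (v r * w s - v s * w r).
  by rewrite /Dop /addF /scaleF !DeK //; ring.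
rewrite mulN1r oppr_eq0 mulf_neq0 ?hsign_neq0 // mulf_neq0 //.
by rewrite mulf_neq0 ?sgn_neq0.
Qed.

Lemma ker_nonzero (v w : vec) : N2 v w != 0 ->
  exists X : form, [/\ is_kform 4 X, Bop v w X = zeroF & exists J, X J != 0].
Proof.
case/pick_rs => r [s [rs hm hT]].
have [T [rT sT cT]] := hT 2%N isT.
have hX : is_kform 4 (ext v (ext w (basis4 R T))).
  by apply: ext_deg; apply: ext_deg; apply: basis_deg.
exists (ext v (ext w (basis4 R T))); split => //.
  rewrite (B_D4 _ _ hX) D_kill; apply: functional_extensionality => J.
  by rewrite /scaleF /hodge /zeroF !mulr0.
exists (r |: (s |: T)); rewrite ker_coef //.
have rsT : r \notin s |: T by rewrite in_setU1 negb_or rs.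
have srT : s \notin r |: T by rewrite in_setU1 negb_or eq_sym rs.
have eJ : r |: (s |: T) = s |: (r |: T) by rewrite !setUA (setUC [set r]).
have e1 : pos s (r |: (s |: T)) = (pos s (s |: T) + (r < s))%N by rewrite posU.
have e2 : pos r (r |: (s |: T)) = (pos r (r |: T) + (s < r))%N by rewrite eJ posU.
rewrite e1 e2.
have := signD (pos s (s |: T)) (pos r (r |: T)) rs.
set A := (-1) ^+ _; set B := (-1) ^+ _; set C := (-1) ^+ _; set D := (-1) ^+ _ => h.
have -> : C * v r * (D * w s) + A * v s * (B * w r) = C * D * v r * w s + A * B * v s * w r by ring.
rewrite h.
have -> : C * D * v r * w s + - (C * D) * v s * w r = (C * D) * (v r * w s - v s * w r) by ring.
by rewrite mulf_neq0 // mulf_neq0 ?sgn_neq0.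
Qed.

Lemma scaleF0 k : scaleF k zeroF = zeroF.
Proof. by apply: functional_extensionality => J; rewrite /scaleF /zeroF mulr0. Qed.

Lemma scaleF0x (x : form) : scaleF 0 x = zeroF.
Proof. by apply: functional_extensionality => J; rewrite /scaleF /zeroF mul0r. Qed.

Lemma wn_sq (v w : vec) : wedge_norm v w ^+ 2 = N2 v w.
Proof. by rewrite /wedge_norm sqr_sqrtr // -/(N2 v w) N2_ge0. Qed.

Lemma eig_fwd (v w : vec) (z : R[i]) : eigenvalue (Bmatrix v w) z ->
  z = 0 \/ z = Complex 0 (wedge_norm v w) \/ z = Complex 0 (- wedge_norm v w).
Proof.
case/eigenvalueP => u hu un0.
have h3 : u *m (Bmatrix v w *m Bmatrix v w *m Bmatrix v w) = (z * (z * z)) *: u.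
  by rewrite !mulmxA hu -scalemxAl hu -scalemxAl -scalemxAl hu !scalerA mulrA.
rewrite M3 -scalemxAr hu scalerA in h3.
have : ((z * (z * z)) - (- N2 v w)%:C * z) *: u = 0 by rewrite scalerBl h3 subrr.
move/eqP; rewrite scaler_eq0 (negPf un0) orbF => /eqP hz.
set c := Complex 0 (wedge_norm v w).
have cc : c * c = - (N2 v w)%:C.
  by rewrite -wn_sq /c; simpc; rewrite expr2.
have e : z * (z * z) - (- N2 v w)%:C * z = z * ((z - c) * (z + c)).
  transitivity (z * (z * z - c * c)); last by ring.
  by rewrite cc rmorphN; ring.
move: hz; rewrite e => /eqP; rewrite !mulf_eq0 => /orP[/eqP -> | /orP[]]; first by left.
  by rewrite subr_eq0 => /eqP ->; right; left.
by rewrite addr_eq0 => /eqP ->; right; right; rewrite /c; simpc.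
Qed.

Lemma eig0 (v w : vec) : eigenvalue (Bmatrix v w) 0.
Proof.
apply/eigenvalueP.
case: (eqVneq (N2 v w) 0) => hN; last first.
  case: (ker_nonzero hN) => X [hX BX [J XJ]]; exists (rv X); last exact: rv_neq0 XJ.
  by rewrite rvM // BX scaleF0 rv0 scale0r.
pose K0 := [set q : 'I_8 | (q < 4)%N].
have cK0 : #|K0| = 4%N by exact: (lt_card (Ordinal (isT : (4 < 8)%N))).
have he := basis_deg cK0; set e := basis4 R K0 in he.
have h1 := scale_deg (-1) (B_deg4 v w he).
have h2 := scale_deg (-1) (B_deg4 v w h1).
have ne : rv e != 0 by apply: (@rv_neq0 _ K0) => //; rewrite /e /basis4 eqxx oner_eq0.
case: (eqVneq (rv (scaleF (-1) (Bop v w e))) 0) => r1.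
  by exists (rv e) => //; rewrite rvM // r1 scale0r.
case: (eqVneq (rv (scaleF (-1) (Bop v w (scaleF (-1) (Bop v w e))))) 0) => r2.
  by exists (rv (scaleF (-1) (Bop v w e))) => //; rewrite rvM // r2 scale0r.
exists (rv (scaleF (-1) (Bop v w (scaleF (-1) (Bop v w e))))) => //; rewrite rvM //.
by rewrite !Bop_scale B3 // hN oppr0 scaleF0x !scaleF0 rv0 scale0r.
Qed.

Lemma eig_c (v w : vec) (c : R) : c * c = N2 v w -> c != 0 -> eigenvalue (Bmatrix v w) (Complex 0 c).
Proof.
move=> hc c0; have hN : N2 v w != 0 by rewrite -hc mulf_neq0.
case: (B_nonzero hN) => a [ha [J hJ]].
have h1 := scale_deg (-1) (B_deg4 v w ha).
have h2 := scale_deg (-1) (B_deg4 v w h1).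
set a1 := scaleF (-1) (Bop v w a) in h1 h2 *.
set a2 := scaleF (-1) (Bop v w a1) in h2 *.
have cc : Complex 0 c * Complex 0 c = - (N2 v w)%:C.
  by rewrite -hc; simpc.
apply/eigenvalueP; exists (rv a2 + Complex 0 c *: rv a1).
  rewrite mulmxDl -scalemxAl !rvM // -/a2.
  have -> : rv (scaleF (-1) (Bop v w a2)) = (- N2 v w)%:C *: rv a1.
    by rewrite /a2 /a1 !Bop_scale B3 // !rv_scale !scalerA -!rmorphM; congr (_ *: _); congr (_%:C); ring.
  by rewrite scalerDr scalerA cc rmorphN addrC.
have a1J : a1 J != 0 by rewrite /a1 /scaleF mulN1r oppr_eq0.
have JQ : J \in quad by rewrite inE; apply: contraR a1J => /h1 ->.
apply/eqP => h; have := congr1 (fun m : 'rV[R[i]]_#|quad| => let: Complex _ y := m 0 (enum_rank_in JQ J) in y) h.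
rewrite !mxE enum_rankK_in //; simpc => /= /eqP.
by rewrite mulf_eq0 (negPf c0) (negPf a1J).
Qed.
End Forms.

Unset Implicit Arguments.

Theorem mainTheorem17 (R : rcfType) (v w : vec8 R) :
  (* B maps 4-forms to 4-forms and is skew-symmetric w.r.t. the induced inner product *)
  (forall a : extform R, is_kform 4 a -> is_kform 4 (Bop v w a)) /\
  (forall a b : extform R, is_kform 4 a -> is_kform 4 b ->
     form_dot (Bop v w a) b = - form_dot a (Bop v w b)) /\
  (* its (complex) eigenvalues are exactly 0 and +- i |v /\ w| *)
  (forall z : R[i], eigenvalue (Bmatrix v w) z <->
     (z = 0 \/ z = Complex 0 (wedge_norm v w) \/ z = Complex 0 (- wedge_norm v w))).
Proof.
split; first by move=> a ha; apply: B_deg4.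
split; first by move=> a b ha hb; apply: B_skew.
move=> z; split; first exact: eig_fwd.
have hsq : wedge_norm v w * wedge_norm v w = N2 v w by rewrite -expr2 wn_sq.
case: (eqVneq (wedge_norm v w) 0) => [h0|hn].
  by rewrite h0 oppr0 => -[->|[->|->]]; exact: eig0.
case => [->|[->|->]]; first exact: eig0.
  exact: eig_c.
by apply: eig_c; rewrite ?mulrNN ?oppr_eq0.
Qed.
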